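(* Let $\mathcal{S}$ be a semifilter. Then $\mathbb{Q}\times\mathcal{S}$ is homeomorphic to a semifilter.
   Context: $\mathbb{Q}$ denotes the space of rationals. A semifilter (on $\omega$) is a collection $\mathcal{S}\subseteq\mathcal{P}(\omega)$ such that $\varnothing\notin\mathcal{S}$, $\omega\in\mathcal{S}$, $\mathcal{S}$ is closed under finite modifications (if $x\in\mathcal{S}$ and $y\subseteq\omega$ with $(x\setminus y)\cup(y\setminus x)$ finite then $y\in\mathcal{S}$), and $\mathcal{S}$ is upward-closed. Subsets of $\mathcal{P}(\omega)$ are identified via characteristic functions with subspaces of $2^\omega$. *)

(* Defs.v *)
(* rationals are mathcomp's [rat]; subsets of P(omega) are
   predicates on the Cantor space [nat -> bool] (characteristic functions). *)
From HB Require Import structures.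
From mathcomp Require Import all_boot all_order all_algebra.
Set Implicit Arguments. Unset Strict Implicit. Unset Printing Implicit Defensive.
Import Order.TTheory GRing.Theory Num.Theory.

Definition cantor := nat -> bool.

Definition agree (x y : cantor) (m : nat) : Prop :=
  forall i : nat, (i < m)%N -> x i = y i.

Definition omega_family := cantor -> Prop.

Definition semifilter (S : omega_family) : Prop :=
  [/\ ~ S (fun _ => false),
      S (fun _ => true),
      (forall x y : cantor, S x ->
          (exists N : nat, forall n : nat, (N <= n)%N -> x n = y n) -> S y)
    & (forall x y : cantor, S x -> (forall n : nat, x n -> y n) -> S y)].

Definition QxS (S : omega_family) (p : rat * cantor) : Prop := S p.2.

Definition cont_on_Qc (A : rat * cantor -> Prop) (h : rat * cantor -> cantor) :=
  forall p : rat * cantor, A p -> forall n : nat,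
    exists (delta : rat) (m : nat), (0 < delta)%R /\
      forall p' : rat * cantor, A p' ->
        (`|p'.1 - p.1| < delta)%R -> agree p'.2 p.2 m -> agree (h p') (h p) n.

Definition cont_on_cQ (B : cantor -> Prop) (g : cantor -> rat * cantor) :=
  forall y : cantor, B y -> forall (eps : rat) (n : nat), (0 < eps)%R ->
    exists m : nat, forall y' : cantor, B y' -> agree y' y m ->
      (`|(g y').1 - (g y).1| < eps)%R /\ agree (g y').2 (g y).2 n.

Definition homeomorphic_Qc (A : rat * cantor -> Prop) (B : cantor -> Prop) :=
  exists (h : rat * cantor -> cantor) (g : cantor -> rat * cantor),
    (forall p, A p -> B (h p)) /\
    (forall y, B y -> A (g y)) /\
    (forall p, A p -> g (h p) = p) /\
    (forall y, B y -> h (g y) = y) /\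
    cont_on_Qc A h /\
    cont_on_cQ B g.

(* Main.v *)
From HB Require Import structures.
From mathcomp Require Import all_boot all_order all_algebra.
From mathcomp Require Import zify ring lra.
Set Implicit Arguments. Unset Strict Implicit. Unset Printing Implicit Defensive.
Import Order.TTheory GRing.Theory Num.Theory.
Local Open Scope ring_scope.
From Stdlib Require Import ClassicalEpsilon Classical FunctionalExtensionality.
Require Import Defs.

Lemma sq_ne2 (y : rat) : y ^+ 2 != 2.
Proof.
apply/negP => /eqP H.
have E := numqE y.
set n := numq y in E. set d := denq y in E.
have H2 : (n ^+ 2 = 2 * d ^+ 2)%R.
  apply/eqP; rewrite -(eqr_int rat) rmorphXn rmorphM /= E exprMn H.
  by rewrite rmorphXn.
have H3 : (`|n| ^ 2 = 2 * `|d| ^ 2)%N.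
  by have := congr1 absz H2; rewrite abszM !abszX.
have cop := coprime_num_den y.
have dn : (2 %| `|n| ^ 2)%N by rewrite H3; apply: dvdn_mulr.
have dn' : (2 %| `|n|)%N by move: dn; rewrite Euclid_dvdX // => /andP[].
case/dvdnP: dn' => c Hc.
have H4 : (`|d| ^ 2 = 2 * c ^ 2)%N.
  by move: H3; rewrite Hc; lia.
have dd : (2 %| `|d|)%N.
  by have := @Euclid_dvdX `|d| 2 2 isT; rewrite H4 andbT => <-; apply: dvdn_mulr.
move: cop; rewrite /coprime => /eqP cop.
have : (2 %| gcdn `|numq y| `|denq y|)%N by rewrite dvdn_gcd Hc dvdn_mull // dd.
by rewrite cop.
Qed.

Lemma four_pow (k : nat) : (4 : rat) ^+ k = (2 ^+ k) ^+ 2.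
Proof. by rewrite -exprM mulnC exprM expr2 -[4 in LHS]/(2 * 2 : rat). Qed.

Lemma two_pow_gt0 (k : nat) : 0 < (2 : rat) ^+ k.
Proof. by rewrite exprn_gt0. Qed.

Lemma L_arch (e : rat) : 0 < e -> exists k : nat, 2 < e * 2 ^+ k.
Proof.
move=> he.
have h0 : 0 <= 2 / e by rewrite divr_ge0 // ltW.
have := archi_boundP h0.
set n := Num.bound _ => hn.
exists n.
have : (n%:R : rat) < 2 ^+ n by rewrite -natrX ltr_nat ltn_expl.
move=> h2.
have : 2 / e < 2 ^+ n by apply: lt_trans hn h2.
by rewrite ltr_pdivrMr // mulrC.
Qed.

Definition bl (q : rat) (k : nat) (r : rat) : Prop := (r - q) ^+ 2 * 4 ^+ k < 2.

Lemma bl_center q k : bl q k q.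
Proof. by rewrite /bl subrr expr0n /= mul0r. Qed.

Lemma bl_mono q k k' r : (k <= k')%N -> bl q k' r -> bl q k r.
Proof.
rewrite /bl => hk; apply: le_lt_trans.
apply: ler_wpM2l; first by rewrite sqr_ge0.
by rewrite ler_eXn2l.
Qed.

Lemma bl_small q k r : bl q k r -> `|r - q| * 2 ^+ k < 2.
Proof.
rewrite /bl four_pow -exprMn -real_normK ?num_real // normrM (ger0_norm (ltW (two_pow_gt0 k))).
move=> h.
have h1 : 0 <= `|r - q| * 2 ^+ k by rewrite mulr_ge0 // ltW // two_pow_gt0.
nra.
Qed.

Lemma bl_wit q k : bl q k (q + (2 ^+ k)^-1) /\ ~ bl q k.+1 (q + (2 ^+ k)^-1).
Proof.
rewrite /bl addrAC subrr add0r.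
have h := two_pow_gt0 k.
have e1 : ((2 ^+ k)^-1)^+2 * (4:rat)^+k = 1.
  by rewrite four_pow exprVn mulVf // expf_neq0 // gt_eqF.
rewrite [(4:rat) ^+ k.+1]exprS mulrCA e1 mulr1; split; [by [] | lra].
Qed.
Definition opn (C : rat -> Prop) := forall r, C r ->
  exists d : rat, 0 < d /\ forall r', `|r' - r| < d -> C r'.

Lemma cont_sq (q r c g : rat) : 0 < c -> 0 < g -> exists d : rat, 0 < d /\
  forall r', `|r' - r| < d -> `|(r' - q) ^+ 2 * c - (r - q) ^+ 2 * c| < g.
Proof.
move=> hc hg.
set A := `|r - q|.
have hA : 0 <= A by rewrite normr_ge0.
have hden : 0 < c * (2 * A + 1) + g by nra.
exists (g / (c * (2 * A + 1) + g)); split; first by rewrite divr_gt0.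
set d := g / _.
have hd : d * (c * (2 * A + 1) + g) = g by rewrite /d mulfVK // gt_eqF.
move=> r' hr.
set e := r' - r.
have -> : (r' - q) ^+ 2 * c - (r - q) ^+ 2 * c = c * (e * (2 * (r - q) + e)).
  by rewrite /e; ring.
rewrite normrM (gtr0_norm hc) normrM.
have hE : 0 <= `|e| by rewrite normr_ge0.
have hP : `|2 * (r - q) + e| <= 2 * A + `|e|.
  apply: le_trans (ler_normD _ _) _.
  by rewrite normrM ger0_norm.
have hP0 : 0 <= `|2 * (r - q) + e| by rewrite normr_ge0.
have d1 : d <= 1 by nra.
have s1 : `|e| * `|2 * (r - q) + e| <= `|e| * (2 * A + 1).
  apply: ler_wpM2l => //; lra.
have s2 : `|e| * (2 * A + 1) < d * (2 * A + 1).
  by rewrite ltr_pM2r //; lra.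
nra.
Qed.

Lemma opn_bl q k : opn (bl q k).
Proof.
move=> r hr.
have hc : (0 : rat) < 4 ^+ k by rewrite exprn_gt0.
have hg : (0 : rat) < 2 - (r - q) ^+ 2 * 4 ^+ k by rewrite subr_gt0.
have [d [hd H]] := cont_sq q r hc hg.
exists d; split => // r' /H; rewrite /bl ltr_norml; lra.
Qed.

Lemma opn_nbl q k : opn (fun r => ~ bl q k r).
Proof.
move=> r hr.
have hc : (0 : rat) < 4 ^+ k by rewrite exprn_gt0.
have hne : (r - q) ^+ 2 * 4 ^+ k != 2.
  by rewrite four_pow -exprMn sq_ne2.
have hg : (0 : rat) < (r - q) ^+ 2 * 4 ^+ k - 2.
  rewrite subr_gt0 lt_neqAle eq_sym hne /=; rewrite leNgt; exact/negP.
have [d [hd H]] := cont_sq q r hc hg.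
exists d; split => // r' /H; rewrite /bl ltr_norml; lra.
Qed.

Lemma opn_and (A B : rat -> Prop) : opn A -> opn B -> opn (fun r => A r /\ B r).
Proof.
move=> oA oB r [/oA [d1 [h1 H1]] /oB [d2 [h2 H2]]].
exists (Num.min d1 d2); split; first by rewrite lt_min h1 h2.
by move=> r'; rewrite lt_min => /andP[/H1 ? /H2 ?].
Qed.

Lemma opn_T : opn (fun _ => True).
Proof. by move=> r _; exists 1; split. Qed.

Lemma opn_ball (C : rat -> Prop) q : opn C -> C q -> exists k, forall r, bl q k r -> C r.
Proof.
move=> oC /oC [d [hd H]].
have [k hk] := L_arch hd.
exists k => r /bl_small h; apply: H.
have h2 := two_pow_gt0 k.
rewrite -(ltr_pM2r h2); lra.
Qed.

Lemma bl_lim q r k0 : (forall j, bl q (k0 + j) r) -> r = q.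
Proof.
move=> H; apply/eqP; rewrite -subr_eq0; apply: contraT => hne.
have hp : 0 < `|r - q| by rewrite normr_gt0.
have [k hk] := L_arch hp.
have := bl_small (bl_mono (leq_addl k0 k) (H k)).
lra.
Qed.

Lemma min_ex (C : rat -> Prop) r : C r ->
  exists q, C q /\ forall r', C r' -> (pickle q <= pickle r')%N.
Proof.
move=> hr.
suff : forall n r, C r -> (pickle r <= n)%N ->
  exists q, C q /\ forall r', C r' -> (pickle q <= pickle r')%N by apply; [exact hr|].
elim=> [|n IH] r0 h0 hle.
  by exists r0; split => // r' _; move: hle; rewrite leqn0 => /eqP ->.
case: (classic (exists r', C r' /\ (pickle r' < pickle r0)%N)) => [[r' [h1 h2]]|hn].
  by apply: (IH r') => //; rewrite -ltnS; apply: leq_trans h2 hle.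
exists r0; split => // r' hr'; rewrite leqNgt; apply/negP => hlt.
by apply: hn; exists r'.
Qed.

Definition cen (C : rat -> Prop) : rat :=
  epsilon (inhabits 0) (fun q => C q /\ forall r, C r -> (pickle q <= pickle r)%N).

Lemma cen_spec (C : rat -> Prop) r : C r ->
  C (cen C) /\ forall r', C r' -> (pickle (cen C) <= pickle r')%N.
Proof. by move=> h; apply: (epsilon_spec _ _ (min_ex h)). Qed.

Definition mrad (C : rat -> Prop) : nat :=
  epsilon (inhabits 0%N) (fun k => forall r, bl (cen C) k r -> C r).

Definition st := ((rat -> Prop) * nat)%type.
Definition Inv (s : st) := opn s.1 /\ exists r, s.1 r.
Definition Kset (s : st) : rat -> Prop :=
  if s.2 is 0%N then s.1 else bl (cen s.1) (mrad s.1 + s.2).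
Definition step (s : st) (b : bool) : st :=
  if b then (s.1, s.2.+1)
  else ((fun r => Kset s r /\ ~ bl (cen s.1) (mrad s.1 + s.2.+1) r), 0%N).

Section Inv.
Variable s : st.
Hypothesis hs : Inv s.

Lemma inv_cen : s.1 (cen s.1) /\ forall r', s.1 r' -> (pickle (cen s.1) <= pickle r')%N.
Proof. by case: hs => _ [r hr]; apply: cen_spec hr. Qed.

Lemma inv_mrad r : bl (cen s.1) (mrad s.1) r -> s.1 r.
Proof.
have [o _] := hs.
have := opn_ball o (proj1 inv_cen).
move=> ex; exact: (epsilon_spec _ _ ex).
Qed.

Lemma K_sub r : Kset s r -> s.1 r.
Proof.
rewrite /Kset; case: s.2 => [//|n] h; apply: inv_mrad.
by apply: bl_mono h; rewrite leq_addr.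
Qed.

Lemma K_cen : Kset s (cen s.1).
Proof. rewrite /Kset; case: s.2 => [|n]; [exact: (proj1 inv_cen)| exact: bl_center]. Qed.

Lemma K_opn : opn (Kset s).
Proof. rewrite /Kset; case: s.2 => [|n]; [exact: (proj1 hs) | exact: opn_bl]. Qed.

Lemma Kt_sub r : Kset (step s true) r -> Kset s r.
Proof.
rewrite /Kset /step /=; case: s.2 => [|n] h.
  by apply: inv_mrad; apply: bl_mono h; rewrite leq_addr.
by apply: bl_mono h; rewrite leq_add2l.
Qed.

Lemma Kf_sub r : Kset (step s false) r -> Kset s r.
Proof. by case. Qed.

Lemma K_split r : Kset s r -> Kset (step s true) r \/ Kset (step s false) r.
Proof.
move=> h; case: (classic (Kset (step s true) r)) => [|hn]; [by left|right].
by split.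
Qed.

Lemma K_disj r : Kset (step s true) r -> Kset (step s false) r -> False.
Proof. by move=> h [_ h']. Qed.

Lemma Inv_step b : Inv (step s b).
Proof.
case: b; first by [].
split; first by apply: opn_and; [exact: K_opn | exact: opn_nbl].
have [w1 w2] := bl_wit (cen s.1) (mrad s.1 + s.2).
exists (cen s.1 + (2 ^+ (mrad s.1 + s.2))^-1); split; last by rewrite addnS.
rewrite /Kset; case E: s.2 => [|n]; last by rewrite -E.
by apply: inv_mrad; move: w1; rewrite E addn0.
Qed.

Lemma cen_step_lt : (pickle (cen s.1) < pickle (cen (step s false).1))%N.
Proof.
have [_ [r hr]] := Inv_step false.
have [h1 _] := cen_spec hr.
have h2 : s.1 (cen (step s false).1) by apply: K_sub; case: h1.
rewrite ltn_neqAle (proj2 inv_cen _ h2) andbT.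
apply/negP => /eqP /(pcan_inj pickleK) E.
by case: h1 => _; rewrite -E; apply; apply: bl_center.
Qed.

End Inv.

Definition init : st := (fun _ => True, 0%N).
Lemma Inv_init : Inv init.
Proof. by split; [exact: opn_T | exists 0]. Qed.

Fixpoint stz (z : cantor) (i : nat) : st :=
  if i is i'.+1 then step (stz z i') (z i') else init.

Lemma Inv_stz z i : Inv (stz z i).
Proof. elim: i => [|i IH] /=; [exact: Inv_init | exact: Inv_step]. Qed.

Lemma stz_agree z z' i : agree z z' i -> stz z i = stz z' i.
Proof.
elim: i => [//|i IH] h /=.
rewrite IH ?h //; last by move=> j hj; apply: h; apply: ltnW.
Qed.

Lemma K_stz_S z i r : Kset (stz z i.+1) r -> Kset (stz z i) r.
Proof.
rewrite /=; case: (z i); [exact: Kt_sub (Inv_stz z i) r | exact: Kf_sub].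
Qed.

Lemma K_stz_mono z i j r : (j <= i)%N -> Kset (stz z i) r -> Kset (stz z j) r.
Proof.
elim: i => [|i IH] hj h; first by move: hj; rewrite leqn0 => /eqP ->.
case: (ltngtP j i.+1) hj => // [hlt _|-> _ //].
by apply: IH; [rewrite -ltnS | exact: K_stz_S].
Qed.

Definition bit (s : st) (r : rat) : bool :=
  if excluded_middle_informative (Kset (step s true) r) then true else false.

Lemma bit_true s r : Kset (step s true) r -> bit s r = true.
Proof. by rewrite /bit; case: excluded_middle_informative. Qed.

Lemma bit_false s r : Kset (step s false) r -> bit s r = false.
Proof.
move=> h; rewrite /bit; case: excluded_middle_informative => // h'.
by case: (K_disj h' h).
Qed.

Fixpoint stF r i : st :=
  if i is i'.+1 then step (stF r i') (bit (stF r i') r) else init.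
Definition F (r : rat) : cantor := fun i => bit (stF r i) r.

Lemma stF_eq r i : stF r i = stz (F r) i.
Proof. by elim: i => [//|i IH] /=; rewrite -IH. Qed.

Lemma F_in r i : Kset (stz (F r) i) r.
Proof.
elim: i => [//|i IH] /=.
rewrite /F -stF_eq; rewrite -stF_eq in IH.
case: (K_split IH) => h.
  by rewrite (bit_true h).
by rewrite (bit_false h).
Qed.

Lemma agree_of_in z r i : Kset (stz z i) r -> agree (F r) z i.
Proof.
elim: i => [|i IH] h; first by move=> j.
have hi := IH (K_stz_S h).
move=> j; rewrite ltnS leq_eqVlt => /orP [/eqP ->|hj]; last by apply: hi.
rewrite /F stF_eq (stz_agree hi).
move: h => /=; case: (z i) => h; [exact: bit_true | exact: bit_false].
Qed.

Definition cofin (z : cantor) := exists N, forall n, (N <= n)%N -> z n = true.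

Lemma F_cofin r : cofin (F r).
Proof.
set z := F r.
pose P i := pickle (cen (stz z i).1).
have hP i : (P i <= pickle r)%N.
  by apply: (proj2 (inv_cen (Inv_stz z i))); apply: K_sub (Inv_stz z i) _ (F_in r i).
have hS i : (P i <= P i.+1)%N /\ (z i = false -> (P i < P i.+1)%N).
  rewrite /P /=; case: (z i) => /=; first by split.
  by have := cen_step_lt (Inv_stz z i) => h; split => //; apply: ltnW.
have hM i j : (i <= j)%N -> (P i <= P j)%N.
  move=> hij; rewrite -(subnKC hij); elim: (j - i)%N => [|k IH]; first by rewrite addn0.
  by apply: leq_trans IH _; rewrite addnS; case: (hS (i + k)%N).
apply: NNPP => hn.
have H c : exists i, (c <= P i)%N.
  elim: c => [|c [i hi]]; first by exists 0%N.
  case: (classic (exists n, (i <= n)%N /\ z n = false)) => [[n [hin hzn]]|hno].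
    exists n.+1; apply: leq_ltn_trans (proj2 (hS n) hzn).
    by apply: leq_trans hi (hM _ _ hin).
  case: hn; exists i => n hin; apply: NNPP => hzn; apply: hno; exists n; split => //.
  by move: hzn; case: (z n).
have [i hi] := H (pickle r).+1.
by have := leq_trans hi (hP i); rewrite ltnn.
Qed.

Definition D (z : cantor) : rat :=
  cen (stz z (epsilon (inhabits 0%N) (fun N => forall n, (N <= n)%N -> z n = true))).1.

Lemma stz_tail z N : (forall n, (N <= n)%N -> z n = true) ->
  forall j, stz z (N + j) = ((stz z N).1, ((stz z N).2 + j)%N).
Proof.
move=> hN; elim=> [|j IH]; first by rewrite !addn0; case: (stz z N).
by rewrite addnS /= IH hN ?leq_addr //= addnS.
Qed.

Lemma cell_tail z N : (forall n, (N <= n)%N -> z n = true) ->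
  forall i, (N <= i)%N -> (stz z i).1 = (stz z N).1.
Proof. by move=> hN i hi; rewrite -(subnKC hi) stz_tail. Qed.

Lemma D_eq z N : (forall n, (N <= n)%N -> z n = true) -> D z = cen (stz z N).1.
Proof.
move=> hN.
have ex : exists N, forall n, (N <= n)%N -> z n = true by exists N.
have h0 := epsilon_spec (inhabits 0%N) _ ex.
rewrite /D; set N0 := epsilon _ _ in h0 *.
rewrite -(cell_tail h0 (leq_maxl N0 N)) -(cell_tail hN (leq_maxr N0 N)) //.
Qed.

Lemma D_in z : cofin z -> forall i, Kset (stz z i) (D z).
Proof.
move=> [N hN] i.
have hN' : forall n, (maxn i N <= n)%N -> z n = true.
  by move=> n hn; apply: hN; apply: leq_trans hn; apply: leq_maxr.
apply: (K_stz_mono (leq_maxl i N)).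
rewrite (D_eq hN'); exact: K_cen (Inv_stz _ _).
Qed.

Lemma F_D z : cofin z -> F (D z) = z.
Proof.
move=> hz; apply: functional_extensionality => i.
by apply: (agree_of_in (D_in hz i.+1)).
Qed.

Lemma D_F r : D (F r) = r.
Proof.
have [N hN] := F_cofin r.
rewrite (D_eq hN).
apply/esym; apply: (@bl_lim _ _ (mrad (stz (F r) N).1 + (stz (F r) N).2 + 1)) => j.
have := F_in r (N + j.+1).
rewrite stz_tail // /Kset /= addnS /=.
have E : (mrad (stz (F r) N).1 + (stz (F r) N).2 + 1 + j =
   mrad (stz (F r) N).1 + ((stz (F r) N).2 + j).+1)%N by lia.
by rewrite E.
Qed.

Lemma F_cont r n : exists d : rat, 0 < d /\
  forall r', `|r' - r| < d -> agree (F r') (F r) n.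
Proof.
have [d [hd H]] := K_opn (Inv_stz (F r) n) (F_in r n).
by exists d; split => // r' /H /agree_of_in.
Qed.

Lemma D_cont z eps : cofin z -> 0 < eps -> exists m, forall z', cofin z' ->
  agree z' z m -> `|D z' - D z| < eps.
Proof.
move=> [N hN] he.
have [k hk] := L_arch he.
exists (N + k.+1)%N => z' hz' ha.
have := D_in hz' (N + k.+1).
rewrite (stz_agree ha) stz_tail // /Kset /= addnS => h.
have h2 : bl (cen (stz z N).1) k (D z').
  by apply: bl_mono h; apply: leq_trans (leq_addl (stz z N).2 k) _; lia.
have := bl_small h2.
rewrite (D_eq hN).
have h3 := two_pow_gt0 k.
move=> h4.
have : `|D z' - cen (stz z N).1| * 2 ^+ k < eps * 2 ^+ k by lra.
by rewrite ltr_pM2r.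
Qed.

Definition evn (y : cantor) : cantor := fun n => y n.*2.
Definition od (y : cantor) : cantor := fun n => y n.*2.+1.
Definition Tset (S : omega_family) : omega_family := fun y => S (od y) /\ cofin (evn y).
Definition hmap (p : rat * cantor) : cantor :=
  fun i => if odd i then p.2 i./2 else F p.1 i./2.
Definition gmap (y : cantor) : rat * cantor := (D (evn y), od y).

Lemma od_h p : od (hmap p) = p.2.
Proof.
apply: functional_extensionality => n.
by rewrite /od /hmap /= odd_double /= uphalf_double.
Qed.

Lemma evn_h p : evn (hmap p) = F p.1.
Proof.
apply: functional_extensionality => n.
by rewrite /evn /hmap odd_double half_double.
Qed.

Lemma h_g y : hmap (gmap y) = y ->  True.
Proof. by []. Qed.

Lemma half_lt i n : (i < n)%N -> (i./2 < n)%N.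
Proof. by move=> h; apply: leq_ltn_trans h; rewrite -{2}(odd_double_half i) -addnn addnA leq_addl. Qed.

Theorem lemma8p2 (S : omega_family) (hS : semifilter S) :
  exists T : omega_family, semifilter T /\ homeomorphic_Qc (QxS S) T.
Proof.
case: hS => h1 h2 h3 h4.
exists (Tset S); split.
  split.
  - by case.
  - by split => //; exists 0%N.
  - move=> x y [hx [N hN]] [M hM]; split.
      apply: (h3 (od x) (od y) hx); exists M => n hn; apply: hM; rewrite -muln2; lia.
    exists (maxn N M) => n hn; rewrite /evn -hM.
      by apply: hN; apply: leq_trans hn; apply: leq_maxl.
    by move: hn; rewrite -muln2 geq_max; lia.
  - move=> x y [hx [N hN]] hxy; split.
      by apply: (h4 (od x) (od y) hx) => n; apply: hxy.
    by exists N => n hn; apply: hxy; apply: hN.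
exists hmap, gmap; split; [|split; [|split; [|split; [|split]]]].
- move=> p hp; split; first by rewrite od_h.
  by rewrite evn_h; apply: F_cofin.
- by move=> y [].
- by move=> [r x] _; rewrite /gmap evn_h od_h D_F.
- move=> y [_ hy]; apply: functional_extensionality => i.
  rewrite /hmap /gmap /= F_D // /evn /od.
  by have E := odd_double_half i; case: (odd i) E => /= E; rewrite -[in RHS]E.
- move=> [r x] _ n.
  have [d [hd H]] := F_cont r n.
  exists d, n; split => // [[r' x']] _ /= hr hx i hi.
  rewrite /hmap /=; case: (odd i).
    by apply: hx; apply: half_lt.
  by apply: H => //; apply: half_lt.
- move=> y [_ hy] eps n he.
  have [m1 H] := D_cont hy he.
  exists (2 * (m1 + n))%N => y' [_ hy'] ha; split.
    rewrite /gmap /=; apply: H => // j hj; apply: ha; rewrite -muln2; lia.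
  by move=> j hj; apply: ha; rewrite /=; rewrite -muln2; lia.
Qed.
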